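(* Let ${\mathsf K},{\mathsf N}\ge1$, $t\in\{0,\ldots,{\mathsf K}-1\}$, and $\mathbb{D}\in\mathbb{F}_2^{{\mathsf K}\times{\mathsf N}}$ with rows $\mathbf y_1,\ldots,\mathbf y_{\mathsf K}$. Let $\mathcal L\subseteq[{\mathsf K}]$ satisfy $|\mathcal L|=\mathrm{rank}_2(\mathbb{D}_{\mathcal L})=\mathrm{rank}_2(\mathbb{D})$, let $\mathcal A\subseteq[{\mathsf K}]\setminus\mathcal L$ with $|\mathcal A|=t+1$, and set $\mathcal B=\mathcal L\cup\mathcal A$. Let $\mathcal W\subseteq\mathcal B$ with $|\mathcal W|=t$ and $i\in[{\mathsf N}]$. Then the number of users $k\in\mathcal B\setminus\mathcal W$ satisfying both $\mathrm{rank}_2(\mathbb{D}_{\mathcal B\setminus(\mathcal W\cup\{k\})})=|\mathcal L|$ and $y_{k,i}\neq0$ is even. Equivalently: in the sum $\bigoplus_{\mathcal V\in\mathscr V_{\mathcal B}}W_{\mathcal B\setminus\mathcal V}$, the number of multicast messages $W_{\mathcal B\setminus\mathcal V}$ (with $\mathcal V\in\mathscr V_{\mathcal B}$) that contain the subfile $F_{i,\mathcal W}$ with nonzero coefficient is even.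
   Context: $\mathbb{D}_{\mathcal S}$ denotes the submatrix of $\mathbb{D}$ formed by the rows with indices in $\mathcal S$. Subfiles: for $i\in[{\mathsf N}]$ and $\mathcal W\subseteq[{\mathsf K}]$ with $|\mathcal W|=t$, $F_{i,\mathcal W}$ is a vector over $\mathbb{F}_2$ (all of a common length). Blocks: $B_{k,\mathcal W}=\sum_{n\in[{\mathsf N}]}y_{k,n}F_{n,\mathcal W}$. Multicast messages: for $\mathcal S\subseteq[{\mathsf K}]$ with $|\mathcal S|=t+1$, $W_{\mathcal S}=\bigoplus_{k\in\mathcal S}B_{k,\mathcal S\setminus\{k\}}$ (sum over $\mathbb{F}_2$). For $\mathcal B\subseteq[{\mathsf K}]$, $\mathscr V_{\mathcal B}$ is the family of subsets $\mathcal V\subseteq\mathcal B$ with $|\mathcal V|=|\mathcal L|$ and $\mathrm{rank}_2(\mathbb{D}_{\mathcal V})=|\mathcal L|$. Note that for $\mathcal V\in\mathscr V_{\mathcal B}$, $|\mathcal B\setminus\mathcal V|=t+1$, and $F_{i,\mathcal W}$ appears in $W_{\mathcal B\setminus\mathcal V}$ with coefficient $y_{k,i}$ exactly when $\mathcal B\setminus\mathcal V=\mathcal W\cup\{k\}$. *)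

(* Defs.v *)
From HB Require Import structures.
From mathcomp Require Import all_boot all_order all_algebra.
Set Implicit Arguments. Unset Strict Implicit. Unset Printing Implicit Defensive.
Import GRing.Theory.
Local Open Scope ring_scope.

Definition rows_of (R : Type) (K N : nat) (D : 'M[R]_(K, N)) (S : {set 'I_K})
  : 'M[R]_(#|S|, N) :=
  rowsub (fun j : 'I_#|S| => @enum_val _ (pred_of_set S) j) D.

(* Main.v *)
Require Import Defs.
From HB Require Import structures.
From mathcomp Require Import all_boot all_order all_algebra.
Local Open Scope ring_scope.
Import GRing.Theory.

Section Aux.
Variables (F : fieldType) (K N : nat) (D : 'M[F]_(K, N)).

Lemma row_in (S : {set 'I_K}) x : x \in S -> (row x D <= rows_of D S)%MS.
Proof.
move=> Sx; rewrite -(enum_rankK_in Sx Sx) /rows_of -row_rowsub; exact: row_sub.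
Qed.

Lemma rows_mono (S T : {set 'I_K}) : S \subset T -> (rows_of D S <= rows_of D T)%MS.
Proof.
move=> ST; apply/row_subP => j; rewrite /rows_of row_rowsub.
apply: row_in; apply: (subsetP ST); exact: enum_valP.
Qed.

Lemma rows_rank (S : {set 'I_K}) : (\rank (rows_of D S) <= \rank D)%N.
Proof. apply: mxrankS; exact: rowsub_sub. Qed.

Lemma kill (S : {set 'I_K}) (v : 'rV_K) :
  (forall x, x \notin S -> v 0 x = 0) -> v != 0 -> v *m D = 0 ->
  (\rank (rows_of D S) < #|S|)%N.
Proof.
move=> supp nz vD0.
set w : 'rV_#|S| := \row_j v 0 (enum_val j).
have wD : w *m rows_of D S = 0.
  have E : v *m D = \sum_(j < #|S|) v 0 (enum_val j) *: row (enum_val j) D.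
    rewrite mulmx_sum_row (bigID (fun x => x \in S)) /=.
    rewrite [X in _ + X]big1 ?addr0; last by move=> x /supp ->; rewrite scale0r.
    exact: big_enum_val.
  rewrite -vD0 E mulmx_sum_row; apply: eq_bigr => j _.
  by rewrite /rows_of row_rowsub mxE.
have wnz : w != 0.
  apply: contraNneq nz => w0; apply/eqP/rowP => x; rewrite mxE.
  have [Sx|nSx] := boolP (x \in S); last exact: supp.
  move/rowP: w0 => /(_ (enum_rank_in Sx x)).
  by rewrite !mxE enum_rankK_in.
rewrite ltn_neqAle rank_leq_row andbT; apply/negP => fr.
by move: wnz; rewrite -(mulmx_free_eq0 _ fr) wD eqxx.
Qed.

Lemma exker (S : {set 'I_K}) : (\rank (rows_of D S) < #|S|)%N ->
  exists v : 'rV_K, [/\ forall x, x \notin S -> v 0 x = 0, v != 0 & v *m D = 0].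
Proof.
move=> lt.
have : kermx (rows_of D S) != 0.
  by rewrite -mxrank_eq0 mxrank_ker subn_eq0 -ltnNge.
rewrite -submx0 => /row_subPn [j]; rewrite submx0 => wnz.
set w := row j _ in wnz.
have w0 : w *m rows_of D S = 0 by rewrite /w -row_mul mulmx_ker row0.
set f := fun j : 'I_#|S| => @enum_val _ (pred_of_set S) j.
have ent : forall x, (w *m rowsub f 1%:M) 0 x = \sum_j w 0 j * (f j == x)%:R.
  by move=> x; rewrite mxE; apply: eq_bigr => l _; rewrite !mxE.
exists (w *m rowsub f 1%:M); split.
- move=> x nSx; rewrite ent big1 // => l _.
  case: eqP => [fx|]; last by rewrite mulr0.
  by move: nSx; rewrite -fx /f enum_valP.
- have [l wl] : exists l, w 0 l != 0.
    apply/existsP; apply: contraNT wnz; rewrite negb_exists => /forallP H.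
    apply/eqP/rowP => l; rewrite [RHS]mxE; apply/eqP; by have := H l; rewrite negbK.
  apply: contraNneq wl => /rowP/(_ (f l)); rewrite ent mxE => <-; apply/eqP.
  rewrite (bigD1 l) //= eqxx mulr1 big1 ?addr0 // => l' nl.
  by case: eqP => [/enum_val_inj/eqP|]; [rewrite (negbTE nl)|rewrite mulr0].
- by rewrite -mulmxA -rowsubE.
Qed.
Lemma span_k (S : {set 'I_K}) (c : 'rV_K) k :
  (forall x, x \notin S -> c 0 x = 0) -> c *m D = 0 -> c 0 k != 0 ->
  (rows_of D S <= rows_of D (S :\ k))%MS.
Proof.
move=> supp cD ck; apply/row_subP => j; rewrite /rows_of row_rowsub.
have Sx := enum_valP j.
case: (eqVneq (enum_val j) k) => [->|nxk]; last first.
  by apply: row_in; rewrite !inE nxk Sx.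
rewrite mulmx_sum_row (bigD1 k) //= in cD.
have E : c 0 k *: row k D = - \sum_(y | y != k) c 0 y *: row y D.
  by apply/eqP; rewrite -addr_eq0 cD.
have -> : row k D = (c 0 k)^-1 *: (c 0 k *: row k D).
  by rewrite scalerA mulVf // scale1r.
rewrite E; apply: scalemx_sub; rewrite -scaleN1r; apply: scalemx_sub.
apply: summx_sub => y nyk.
have [Sy|nSy] := boolP (y \in S).
  by apply: scalemx_sub; apply: row_in; rewrite !inE nyk Sy.
by rewrite supp // scale0r sub0mx.
Qed.

End Aux.

Lemma F2 (x : 'F_2) : x = 0 \/ x = 1.
Proof. case: x => [[|[|m]] Hm]; [left|right|]; try exact/val_inj. by []. Qed.

Theorem lemma1 (K N t : nat) (HK : (1 <= K)%N) (HN : (1 <= N)%N) (Ht : (t < K)%N)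
  (D : 'M['F_2]_(K, N)) (L A W : {set 'I_K}) (i : 'I_N) :
  #|L| = \rank (rows_of D L) ->
  \rank (rows_of D L) = \rank D ->
  A \subset ~: L ->
  #|A| = t.+1 ->
  W \subset (L :|: A) ->
  #|W| = t ->
  ~~ odd #|[set k in (L :|: A) :\: W |
             (\rank (rows_of D ((L :|: A) :\: (W :|: [set k]))) == #|L|)
             && (D k i != 0)]|.
Proof.
move=> rL rD AL cA WB cW.
have LA0 : L :&: A = set0.
  apply/setP=> x; rewrite !inE; apply/negbTE; apply/andP=> [[xL xA]].
  by move: (subsetP AL x xA); rewrite inE xL.
set U := (L :|: A) :\: W.
set r := #|L|.
have cU : #|U| = r.+1.
  rewrite /U cardsD (setIidPr WB) cardsU LA0 cards0 subn0 cA cW.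
  by rewrite addnS -addSn addnK.
have rDr : \rank D = r by rewrite /r rL rD.
have cUk : forall k, k \in U -> #|U :\ k| = r.
  by move=> k kU; move: cU; rewrite (cardsD1 k) kU add1n => -[].
have rU : (\rank (rows_of D U) <= r)%N by rewrite -rDr; apply: rows_rank.
have [c [csupp cnz cD]] : exists c : 'rV_K,
    [/\ forall x, x \notin U -> c 0 x = 0, c != 0 & c *m D = 0].
  by apply: exker; apply: (leq_ltn_trans rU); rewrite cU.
have Ek : forall k, (L :|: A) :\: (W :|: [set k]) = U :\ k.
  by move=> k; rewrite /U setDDl.
case: (eqVneq (\rank (rows_of D U)) r) => hr; last first.
  rewrite (_ : [set k in U | _] = set0) ?cards0 //.
  apply/setP => k; rewrite in_set in_set0 Ek; apply/negbTE.
  apply/andP => [[kU /andP[/eqP h _]]].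
  have : (\rank (rows_of D (U :\ k)) <= \rank (rows_of D U))%N.
    by apply: mxrankS; apply: rows_mono; apply: subD1set.
  rewrite h => le; move: hr; rewrite neq_ltn => /orP[lt|]; last by rewrite ltnNge rU.
  by move: (leq_ltn_trans le lt); rewrite ltnn.
set G := [set k in U | (c 0 k != 0) && (D k i != 0)].
rewrite (_ : [set k in U | _] = G); last first.
  apply/setP => k; rewrite in_set [RHS]in_set Ek.
  have [kU|] := boolP (k \in U); last by [].
  rewrite /=; congr (_ && _).
  have [ck0|ck] := eqVneq (c 0 k) 0.
    rewrite /=.
    apply/negbTE; rewrite -(cUk k kU) neq_ltn; apply/orP; left.
    apply: (@kill _ _ _ D (U :\ k) c _ cnz cD) => x; rewrite in_setD1 negb_and negbK.
    by case/orP => [/eqP -> //|]; apply: csupp.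
  rewrite /=.
  rewrite eqn_leq -{1}rDr rows_rank /= -{1}hr.
  by apply: mxrankS; apply: (@span_k _ _ _ D U c k csupp cD ck).
move/matrixP: cD => /(_ 0 i); rewrite !mxE => S0.
rewrite (eq_bigr (fun x => if x \in G then 1 else 0)) in S0; last first.
  move=> x _; rewrite in_set.
  have [xU|nxU] := boolP (x \in U); last by rewrite csupp // mul0r.
  by case: (F2 (c 0 x)) => ->; case: (F2 (D x i)) => ->; rewrite ?mulr0 ?mul0r ?mulr1 ?eqxx ?oner_eq0 /=.
rewrite -big_mkcond sumr_const /= in S0.
rewrite -dvdn2 (dvdn_pcharf (pchar_Fp (isT : prime 2))) S0 //.
Qed.
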